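(* Let $0<L<\infty$ and let $(T_f,T_s)$ be the unique solution on $[0,L]$ of the boundary value problem $$-\varphi\kappa_fT_f''+c_{p,f}\frac{\dot m_c}{A_c}T_f'=h_v(T_s-T_f),\qquad (1-\varphi)\kappa_sT_s''=h_v(T_s-T_f)\quad\text{on }(0,L),$$ $$T_f(0)=T_s(0)=T_b,\quad (1-\varphi)\kappa_sT_s'(L)=q_{HG}-c_{p,f}\frac{\dot m_c}{A_c}(T_s(L)-T_f(L)),\quad T_f'(L)=\frac{h_vA_c}{c_{p,f}\dot m_c}(T_s(L)-T_f(L)).$$ Then $T_s(y)\ge T_f(y)$ for all $y\in[0,L]$, and the two temperatures coincide if and only if $\gamma:=\frac{q_{HG}}{(1-\varphi)\kappa_s}=0$.
   Context: Parameters: $\varphi\in(0,1)$, $\kappa_f,\kappa_s,h_v,c_{p,f},\dot m_c,A_c>0$, $T_b\in\mathbb R$, $q_{HG}\ge 0$ (the heat flux from the hot gas; the paper's sign analysis treats the case $q_{HG}\ge0$). *)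

(* Defs.v *)
From Stdlib Require Import Reals.
From Coquelicot Require Import Coquelicot.
Open Scope R_scope.

Definition C2_on (L : R) (f : R -> R) : Prop :=
  forall y, 0 <= y <= L -> ex_derive f y /\ ex_derive (Derive f) y.

Definition is_solution (phi kf ks hv cpf mdot Ac Tb q L : R)
    (Tf Ts : R -> R) : Prop :=
  C2_on L Tf /\ C2_on L Ts /\
  (forall y, 0 < y < L ->
     - phi * kf * Derive (Derive Tf) y + cpf * (mdot / Ac) * Derive Tf y
       = hv * (Ts y - Tf y)) /\
  (forall y, 0 < y < L ->
     (1 - phi) * ks * Derive (Derive Ts) y = hv * (Ts y - Tf y)) /\
  Tf 0 = Tb /\ Ts 0 = Tb /\
  (1 - phi) * ks * Derive Ts L = q - cpf * (mdot / Ac) * (Ts L - Tf L) /\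
  Derive Tf L = (hv * Ac) / (cpf * mdot) * (Ts L - Tf L).

Definition gamma (phi ks q : R) : R := q / ((1 - phi) * ks).

(* Main.v *)
Require Import Defs.
From Stdlib Require Import Reals Lra.
From Coquelicot Require Import Coquelicot.
Open Scope R_scope.

Lemma cont_of (f : R -> R) x d : is_derive f x d -> continuity_pt f x.
Proof.
  intro H. apply continuity_pt_filterlim. apply (ex_derive_continuous (K:=R_AbsRing) (V:=R_NormedModule)). now exists d.
Qed.

Lemma endpt_min (f : R -> R) (L d : R) : 0 < L -> is_derive f L d ->
  (forall x, 0 <= x <= L -> f L <= f x) -> d <= 0.
Proof.
  intros HL Hd Hmin.
  destruct (Rle_lt_dec d 0) as [|Hpos]; [assumption|exfalso].
  apply is_derive_Reals in Hd.
  destruct (Hd d Hpos) as [[del Hdel] Hh].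
  set (h := - Rmin (del/2) L).
  assert (Hm1 : 0 < Rmin (del/2) L) by (apply Rmin_glb_lt; lra).
  assert (Hm2 : Rmin (del/2) L <= del/2) by apply Rmin_l.
  assert (Hm3 : Rmin (del/2) L <= L) by apply Rmin_r.
  assert (hn : h <> 0) by (unfold h; lra).
  assert (ha : Rabs h < del) by (unfold h; rewrite Rabs_Ropp, Rabs_pos_eq; lra).
  specialize (Hh h hn ha).
  apply Rabs_def2 in Hh.
  set (t := (f (L + h) - f L) / h) in Hh.
  assert (Ht : f (L + h) - f L = t * h) by (unfold t; field; auto).
  assert (Hge : f L <= f (L + h)) by (apply Hmin; unfold h; lra).
  assert (h < 0) by (unfold h; lra).
  nra.
Qed.

Lemma key (w w1 w2 p p1 : R -> R) (L al be k Q D : R) :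
 0 < L -> 0 < al -> 0 < be -> be < k -> 0 <= Q -> 0 < D ->
 (forall y, 0 <= y <= L -> is_derive w y (w1 y)) ->
 (forall y, 0 < y < L -> is_derive w1 y (w2 y)) ->
 (forall y, 0 <= y <= L -> is_derive p y (p1 y)) ->
 (forall y, 0 < y < L -> w2 y = k * w y - al * p y) ->
 (forall y, 0 < y < L -> p1 y = al * p y - be * w y) ->
 w 0 = 0 -> p L = be / al * w L -> w1 L = Q - D * w L ->
 forall y, 0 <= y <= L -> 0 <= w y.
Proof.
  intros HL Hal Hbe Hk HQ HD Dw Dw1 Dp Ew2 Ep1 W0 PL W1L.
  destruct (continuity_ab_min w 0 L) as [y0 [Hmin Hy0]]; [lra| intros c Hc; eapply cont_of; eauto|].
  set (m := w y0) in *.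
  destruct (Rle_lt_dec 0 m) as [Hm|Hm].
  { intros y Hy. specialize (Hmin y Hy). lra. }
  exfalso.
  assert (Pb : forall y, 0 <= y <= L -> be / al * m <= p y).
  { intros y Hy.
    assert (HgL : 0 <= p L - be/al*m).
    { rewrite PL. assert (m <= w L) by (apply Hmin; lra).
      assert (0 < be/al) by (apply Rdiv_lt_0_compat; lra). nra. }
    destruct (Req_dec y L) as [->|HyL]; [lra|].
    set (g := fun x => exp (- al * x) * (p x - be/al*m)).
    set (g' := fun x => (- al * exp (- al * x)) * (p x - be/al*m) + exp (-al*x) * p1 x).
    destruct (MVT_cor2 g g' y L) as [c [Hc1 Hc2]]; [lra| |].
    { intros c Hc. apply is_derive_Reals.
      unfold g, g'.
      apply (is_derive_mult (fun x => exp (-al*x)) (fun x => p x - be/al*m)).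
      - auto_derive; auto. ring.
      - replace (p1 c) with (minus (p1 c) 0) by (unfold minus, plus, opp; simpl; ring).
        apply (is_derive_minus p (fun _ => be/al*m)). apply Dp; lra. apply (is_derive_const (K:=R_AbsRing) (V:=R_NormedModule)).
      - intros; apply Rmult_comm. }
    assert (Hg' : g' c <= 0).
    { unfold g'. rewrite Ep1 by lra.
      assert (m <= w c) by (apply Hmin; lra).
      assert (0 < exp (-al*c)) by apply exp_pos.
      assert (E : - al * exp (- al * c) * (p c - be / al * m) + exp (- al * c) * (al * p c - be * w c)
                = exp (-al*c) * (be * (m - w c))) by (field; lra).
      rewrite E. assert (be * (m - w c) <= 0) by nra. nra. }
    assert (g y >= g L) by nra.
    unfold g in *.
    assert (0 < exp (-al*y)) by apply exp_pos.
    assert (0 < exp (-al*L)) by apply exp_pos.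
    nra. }
  assert (Hy0n : y0 <> 0) by (intro E; unfold m in Hm; rewrite E, W0 in Hm; lra).
  destruct (Req_dec y0 L) as [E|HyL].
  { assert (w1 L <= 0).
    { apply (endpt_min w L). lra. apply Dw; lra. intros x Hx. rewrite <- E. apply Hmin. lra. }
    rewrite W1L in H. unfold m in Hm. rewrite E in Hm. nra. }
  assert (Hc := cont_of _ _ _ (Dw y0 Hy0)).
  assert (Heps : 0 < be*m/k - m).
  { assert (be*m/k - m = m * (be - k) / k) by (field; lra). rewrite H.
    apply Rdiv_lt_0_compat; nra. }
  destruct (Hc _ Heps) as [del [Hdel Hdl]].
  set (e := Rmin (del/2) (Rmin (y0/2) ((L-y0)/2))).
  assert (e1 : e <= del/2) by apply Rmin_l.
  assert (e2 : e <= y0/2) by (eapply Rle_trans; [apply Rmin_r|apply Rmin_l]).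
  assert (e3 : e <= (L-y0)/2) by (eapply Rle_trans; [apply Rmin_r|apply Rmin_r]).
  assert (e0 : 0 < e) by (apply Rmin_glb_lt; [lra|apply Rmin_glb_lt; lra]).
  assert (Neg : forall x, y0 - e <= x <= y0 + e -> w2 x < 0).
  { intros x Hx.
    assert (Hwx : w x < be*m/k).
    { destruct (Req_dec x y0) as [->|Hne].
      - fold m. lra.
      - assert (R_dist (w x) (w y0) < be*m/k - m).
        { apply Hdl. split. split; [exact I | auto]. simpl. unfold R_dist. apply Rabs_def1; lra. }
        unfold R_dist in H. apply Rabs_def2 in H. fold m in H. lra. }
    rewrite Ew2 by lra.
    assert (be/al*m <= p x) by (apply Pb; lra).
    assert (al * (be/al*m) = be*m) by (field; lra).
    assert (k * w x < be * m).
    { assert (k * (be*m/k) = be*m) by (field; lra). nra. }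
    nra. }
  destruct (MVT_cor2 w w1 y0 (y0+e)) as [x1 [Hx1 Hx1']]; [lra| intros; apply is_derive_Reals, Dw; lra|].
  destruct (MVT_cor2 w w1 (y0-e) y0) as [x2 [Hx2 Hx2']]; [lra| intros; apply is_derive_Reals, Dw; lra|].
  destruct (MVT_cor2 w1 w2 x2 x1) as [x3 [Hx3 Hx3']]; [lra| intros; apply is_derive_Reals, Dw1; lra|].
  assert (m <= w (y0+e)) by (apply Hmin; lra).
  assert (m <= w (y0-e)) by (apply Hmin; lra).
  assert (w2 x3 < 0) by (apply Neg; lra).
  fold m in Hx1, Hx2.
  assert (w1 x1 >= 0) by nra.
  assert (w1 x2 <= 0) by nra.
  nra.
Qed.

Theorem lemma3 (phi kf ks hv cpf mdot Ac Tb q L : R) (Tf Ts : R -> R) :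
  0 < phi < 1 -> 0 < kf -> 0 < ks -> 0 < hv -> 0 < cpf -> 0 < mdot -> 0 < Ac ->
  0 <= q -> 0 < L ->
  is_solution phi kf ks hv cpf mdot Ac Tb q L Tf Ts ->
  (forall y, 0 <= y <= L -> Tf y <= Ts y) /\
  ((forall y, 0 <= y <= L -> Ts y = Tf y) <-> gamma phi ks q = 0).
Proof.
  intros Hphi Hkf Hks Hhv Hcp Hmd HAc Hq HL
    [CF [CS [EF [ES [F0 [S0 [BS BF]]]]]]].
  set (a := phi * kf). set (b := (1 - phi) * ks). set (c := cpf * (mdot / Ac)).
  assert (Ha : 0 < a) by (unfold a; nra).
  assert (Hb : 0 < b) by (unfold b; nra).
  assert (Hc : 0 < c) by (unfold c; apply Rmult_lt_0_compat; [lra| apply Rdiv_lt_0_compat; lra]).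
  set (w := fun y => Ts y - Tf y).
  set (w1 := fun y => Derive Ts y - Derive Tf y).
  set (w2 := fun y => Derive (Derive Ts) y - Derive (Derive Tf) y).
  set (p := Derive Tf). set (p1 := Derive (Derive Tf)).
  assert (Dw : forall y, 0 <= y <= L -> is_derive w y (w1 y)).
  { intros y Hy. apply (is_derive_minus Ts Tf).
    apply Derive_correct, CS, Hy. apply Derive_correct, CF, Hy. }
  assert (Dw1 : forall y, 0 < y < L -> is_derive w1 y (w2 y)).
  { intros y Hy. apply (is_derive_minus (Derive Ts) (Derive Tf)).
    apply Derive_correct, CS; lra. apply Derive_correct, CF; lra. }
  assert (Dp : forall y, 0 <= y <= L -> is_derive p y (p1 y)).
  { intros y Hy. apply Derive_correct, CF, Hy. }
  set (al := c / a). set (be := hv / a). set (k := hv / b + hv / a).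
  assert (Ew2 : forall y, 0 < y < L -> w2 y = k * w y - al * p y).
  { intros y Hy. specialize (EF y Hy). specialize (ES y Hy). fold a b c in EF, ES.
    unfold w2, w, k, al, p.
    assert (E1 : Derive (Derive Ts) y = (b * Derive (Derive Ts) y) / b) by (field; lra).
    assert (E2 : Derive (Derive Tf) y = (a * Derive (Derive Tf) y) / a) by (field; lra).
    assert (E3 : a * Derive (Derive Tf) y = c * Derive Tf y - hv * (Ts y - Tf y)) by (unfold a in *; lra).
    rewrite E1, E2, ES, E3. field. lra. }
  assert (Ep1 : forall y, 0 < y < L -> p1 y = al * p y - be * w y).
  { intros y Hy. specialize (EF y Hy). fold a c in EF.
    unfold p1, w, al, be, p.
    assert (E2 : Derive (Derive Tf) y = (a * Derive (Derive Tf) y) / a) by (field; lra).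
    assert (E3 : a * Derive (Derive Tf) y = c * Derive Tf y - hv * (Ts y - Tf y)) by (unfold a in *; lra).
    rewrite E2, E3. field. lra. }
  assert (W0 : w 0 = 0) by (unfold w; lra).
  assert (PL : p L = be / al * w L).
  { unfold p. rewrite BF. unfold be, al, c, w. field. repeat split; lra. }
  set (D := c / b + hv / c).
  assert (W1L : forall Q, Q = q / b -> w1 L = Q - D * w L).
  { intros Q ->. unfold w1. fold b c in BS.
    assert (Derive Ts L = (q - c * (Ts L - Tf L)) / b) by (rewrite <- BS; field; lra).
    rewrite H, BF. unfold D, w, c. field. repeat split; lra. }
  assert (Hal : 0 < al) by (unfold al; apply Rdiv_lt_0_compat; lra).
  assert (Hbe : 0 < be) by (unfold be; apply Rdiv_lt_0_compat; lra).
  assert (Hk : be < k) by (unfold k, be; assert (0 < hv / b) by (apply Rdiv_lt_0_compat; lra); lra).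
  assert (HD : 0 < D).
  { unfold D. assert (0 < c/b) by (apply Rdiv_lt_0_compat; lra).
    assert (0 < hv/c) by (apply Rdiv_lt_0_compat; lra). lra. }
  assert (Pos : forall y, 0 <= y <= L -> 0 <= w y).
  { apply (key w w1 w2 p p1 L al be k (q/b) D); auto.
    apply Rmult_le_pos; [lra| left; apply Rinv_0_lt_compat; lra]. }
  split.
  { intros y Hy. specialize (Pos y Hy). unfold w in Pos. lra. }
  unfold gamma. fold b.
  split.
  - intros Z.
    assert (Hw1 : w1 L = 0).
    { apply Rle_antisym.
      - apply (endpt_min w L); auto. apply Dw; lra.
        intros x Hx. unfold w. rewrite (Z L), (Z x); lra.
      - assert (- w1 L <= 0); [|lra].
        apply (endpt_min (fun y => - w y) L); auto.
        apply (is_derive_opp w). apply Dw; lra.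
        intros x Hx. unfold w. rewrite (Z L), (Z x); lra. }
    rewrite (W1L (q/b)) in Hw1 by reflexivity.
    unfold w in Hw1. rewrite (Z L) in Hw1 by lra. lra.
  - intros G.
    assert (Neg : forall y, 0 <= y <= L -> 0 <= - w y).
    { apply (key (fun y => - w y) (fun y => - w1 y) (fun y => - w2 y)
                 (fun y => - p y) (fun y => - p1 y) L al be k 0 D); auto; try lra.
      - intros y Hy. apply (is_derive_opp w). auto.
      - intros y Hy. apply (is_derive_opp w1). auto.
      - intros y Hy. apply (is_derive_opp p). auto.
      - intros y Hy. rewrite Ew2 by lra. ring.
      - intros y Hy. rewrite Ep1 by lra. ring.
      - rewrite (W1L (q/b)) by reflexivity. rewrite G. ring. }
    intros y Hy. specialize (Pos y Hy). specialize (Neg y Hy). unfold w in *. lra.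
Qed.
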